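(* Let $Z$ be a compact metrisable space, let $\mathfrak{X}$ be a $Z$-valued switched Bebutov shift, and let $\phi\in\mathfrak{X}$ be recurrent with respect to the shift semiflow $(\sigma^t)_{t\ge0}$. Then for every $s\ge0$ there exists $\psi\in\mathfrak{X}$ such that $\sigma^s\psi=\phi$.
   Context: $C([0,\infty),Z)$ carries the compact-open topology (uniform convergence on compact sets). $(\sigma^\tau\phi)(t)\coloneq\phi(\tau+t)$. A $Z$-valued Bebutov shift is a set $\mathfrak{X}\subseteq C([0,\infty),Z)$, compact in the compact-open topology, with $\sigma^\tau\phi\in\mathfrak{X}$ for all $\phi\in\mathfrak{X}$, $\tau\ge0$. It is switched if moreover: whenever $\phi_1,\phi_2\in\mathfrak{X}$ satisfy $\phi_1(\tau)=\phi_2(\tau)$ for some $\tau>0$, the function equal to $\phi_1$ on $[0,\tau]$ and to $\phi_2$ on $[\tau,\infty)$ belongs to $\mathfrak{X}$. $\phi$ is recurrent if there exist $t_n\to\infty$ with $\sigma^{t_n}\phi\to\phi$ in the compact-open topology. *)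

(* Defs.v *)
From HB Require Import structures.
From mathcomp Require Import all_boot all_order all_algebra.
From mathcomp Require Import all_classical all_reals all_analysis.
Set Implicit Arguments. Unset Strict Implicit. Unset Printing Implicit Defensive.
Import Order.TTheory GRing.Theory Num.Theory.
Import numFieldNormedType.Exports.
Local Open Scope classical_set_scope.
Local Open Scope ring_scope.

(* The time half-line [0, +oo) as a subtype of R, with the subspace topology
   (library: initial topology of the inclusion on [set_type]). *)
Notation nnR R := (set_type [set x : R | 0 <= x]).

Lemma nnR_add_ge0 (R : realType) (a b : nnR R) :
  [set x : R | 0 <= x] (set_val a + set_val b).
Proof.
have Ha := set_valP a; have Hb := set_valP b.
by rewrite /= addr_ge0.
Qed.

Definition nnR_add (R : realType) (a b : nnR R) : nnR R :=
  exist _ (set_val a + set_val b) (mem_set (nnR_add_ge0 a b)).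

(* The space C([0,oo), Z) is modelled as functions [nnR R -> Z] (continuity
   imposed separately) carrying the compact-open topology. *)
Definition fspace (R : realType) (Z : topologicalType) :=
  {compact-open, nnR R -> Z}.

Definition bshift (R : realType) (Z : topologicalType) (tau : nnR R)
  (phi : fspace R Z) : fspace R Z := fun t => phi (nnR_add tau t).

Definition bebutov_shift (R : realType) (Z : topologicalType)
  (X : set (fspace R Z)) : Prop :=
  [/\ (forall phi, X phi -> continuous (phi : nnR R -> Z)),
      compact X &
      (forall phi tau, X phi -> X (bshift tau phi))].

Definition concat_at (R : realType) (Z : topologicalType) (tau : R)
  (phi1 phi2 : fspace R Z) : fspace R Z :=
  fun t => if set_val t <= tau then phi1 t else phi2 t.

Definition switched_bebutov_shift (R : realType) (Z : topologicalType)
  (X : set (fspace R Z)) : Prop :=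
  bebutov_shift X /\
  (forall phi1 phi2 (tau : nnR R), 0 < set_val tau ->
     X phi1 -> X phi2 -> phi1 tau = phi2 tau ->
     X (concat_at (set_val tau) phi1 phi2)).

Definition recurrent (R : realType) (Z : topologicalType)
  (phi : fspace R Z) : Prop :=
  exists t : nat -> nnR R,
    ((fun n => set_val (t n)) @ \oo --> +oo) /\
    ((fun n => bshift (t n) phi) @ \oo --> phi).

(* Main.v *)
Require Import Defs.
From HB Require Import structures.
From mathcomp Require Import all_boot all_order all_algebra.
From mathcomp Require Import all_classical all_reals all_analysis.
Import Order.TTheory GRing.Theory Num.Theory.
Import numFieldNormedType.Exports.
Local Open Scope classical_set_scope.
Local Open Scope ring_scope.

Lemma eval_cvg (T U : topologicalType) (F : set_system {compact-open, T -> U})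
  (f : {compact-open, T -> U}) (x : T) :
  Filter F -> F --> f -> (fun g : {compact-open, T -> U} => g x) @ F --> f x.
Proof.
move=> FF /(compact_open_cvgP f FF) H A.
rewrite nbhsE; case=> O [oO Ox] OA.
have := H [set x] O (@compact_set1 _ x) oO.
have hs : f @` [set x] `<=` O by move=> _ [_ -> <-].
move=> /(_ hs) HF; apply: (@filterS _ F FF _ _ _ HF) => g gO /=; apply: OA; apply: gO; by exists x.
Qed.

Lemma sub_nnR_ge0 {R : realType} (a b : nnR R) :
  [set x : R | 0 <= x] (Order.max (set_val a - set_val b) 0).
Proof. by rewrite /= le_max lexx orbT. Qed.

Definition sub_nnR {R : realType} (a b : nnR R) : nnR R :=
  exist _ (Order.max (set_val a - set_val b) 0) (mem_set (sub_nnR_ge0 a b)).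

Theorem lemma2p20 (R : realType) (Z : pseudoMetricType R)
  (hZ : hausdorff_space Z) (cZ : compact [set: Z])
  (X : set (fspace R Z)) (hX : switched_bebutov_shift X)
  (phi : fspace R Z) (Xphi : X phi) (rphi : recurrent phi) :
  forall s : nnR R, exists2 psi : fspace R Z, X psi & bshift s psi = phi.
Proof.
move=> s.
case: hX => -[hcont cX hsh] _.
case: rphi => t [ht hcv].
pose ps n : fspace R Z := bshift (sub_nnR (t n) s) phi.
have Xps n : X (ps n) by apply: hsh.
pose F : set_system (fspace R Z) := ps @ eventually.
have PF : ProperFilter F by rewrite /F; apply: fmap_proper_filter.
have FX : F X by rewrite /F /=; by exists 0%N => // n _; exact: Xps.
have [psi [Xpsi clpsi]] := cX F PF FX.
exists psi => //.
move: clpsi; rewrite cluster_cvgE => -[G PG [Gpsi FG]].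
apply/funext => x.
pose y := nnR_add s x.
have e1 : (fun g : fspace R Z => g y) @ G --> psi y by apply: eval_cvg.
have e3 : (fun n => bshift (t n) phi x) @ \oo --> phi x.
  exact: (@eval_cvg _ _ _ _ x _ hcv).
have H : \forall n \near \oo, set_val s <= set_val (t n).
  by move/cvgryPge: ht; apply.
have e4 : (fun n => ps n y) @ \oo --> phi x.
  apply: cvg_trans e3.
  have E : {near \oo, (fun n => bshift (t n) phi x) =1 (fun n => ps n y)}.
    near=> n.
    have hn : set_val s <= set_val (t n) by near: n; exact: H.
    rewrite /ps /bshift; congr (phi _); apply: val_inj => /=.
    rewrite /= !set_valE /=.
    rewrite (_ : Order.max _ _ = sval (t n) - sval s); first by rewrite addrA subrK.
    by apply/max_idPl; rewrite subr_ge0.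
  exact: (near_eq_cvg E).
have e2 : (fun g : fspace R Z => g y) @ G --> phi x.
  apply: cvg_trans e4; move=> A HA; exact: FG.
rewrite /bshift.
exact: (cvg_unique hZ e1 e2).
Unshelve. all: by end_near.
Qed.
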